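(* Let $n \in\mathbb N$ and $F\colon\mathbb R_+^n \to \mathbb R_+$. Then $F\in P_B^n$ if and only if $F\in P_{MB}^n$.
   Context: $\mathbb R_+=[0,\infty)$. A b-metric on $X$ is $d\colon X^2\to\mathbb R_+$ with $d(x,y)=0\iff x=y$, $d(x,y)=d(y,x)$, and for some $K\geqslant1$, $d(x,z)\leqslant K(d(x,y)+d(y,z))$ for all $x,y,z$; a metric is a b-metric with $K=1$. For spaces $(X_i,d_i)$ put $D(\mathbf x,\mathbf y)=F(d_1(x_1,y_1),\dots,d_n(x_n,y_n))$ on $\prod_{i=1}^nX_i$. $P^n_B$ is the set of $F$ such that for every collection of b-metric spaces $(X_i,d_i)$, $i=1,\dots,n$ (arbitrary constants), $D$ is a b-metric; $P^n_{MB}$ is the set of $F$ such that for every collection of metric spaces $(X_i,d_i)$, $D$ is a b-metric. *)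

(* Defs.v *)
From Stdlib Require Import Reals.
From mathcomp Require Import ssreflect ssrbool eqtype ssrnat fintype.
Open Scope R_scope.

Definition is_bmetric {X : Type} (d : X -> X -> R) : Prop :=
  (forall x y, 0 <= d x y) /\
  (forall x y, d x y = 0 <-> x = y) /\
  (forall x y, d x y = d y x) /\
  (exists K : R, 1 <= K /\ forall x y z, d x z <= K * (d x y + d y z)).

Definition is_metric {X : Type} (d : X -> X -> R) : Prop :=
  (forall x y, 0 <= d x y) /\
  (forall x y, d x y = 0 <-> x = y) /\
  (forall x y, d x y = d y x) /\
  (forall x y z, d x z <= d x y + d y z).

Definition prodD {n : nat} (F : ('I_n -> R) -> R) (X : 'I_n -> Type)
  (d : forall i, X i -> X i -> R) (x y : forall i, X i) : R :=
  F (fun i => d i (x i) (y i)).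

Definition P_B (n : nat) (F : ('I_n -> R) -> R) : Prop :=
  forall (X : 'I_n -> Type) (d : forall i, X i -> X i -> R),
    (forall i, is_bmetric (d i)) -> is_bmetric (prodD F X d).

Definition P_MB (n : nat) (F : ('I_n -> R) -> R) : Prop :=
  forall (X : 'I_n -> Type) (d : forall i, X i -> X i -> R),
    (forall i, is_metric (d i)) -> is_bmetric (prodD F X d).

(* Main.v *)
Require Import Defs.
From Stdlib Require Import Reals Lra FunctionalExtensionality.
From mathcomp Require Import ssreflect ssrbool eqtype ssrnat fintype.
Open Scope R_scope.

Definition dinf (p q : R * R) : R :=
  Rmax (Rabs (fst p - fst q)) (Rabs (snd p - snd q)).

Ltac rsolve := unfold dinf, Rmax, Rabs in *; simpl in *;
  repeat (match goal with
          | |- context [Rcase_abs ?x] => destruct (Rcase_abs x)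
          | |- context [Rle_dec ?x ?y] => destruct (Rle_dec x y)
          | H : context [Rcase_abs ?x] |- _ => destruct (Rcase_abs x)
          | H : context [Rle_dec ?x ?y] |- _ => destruct (Rle_dec x y)
          end); lra.

Lemma dinf_metric : is_metric dinf.
Proof.
  split; [|split; [|split]].
  - move=> [a b] [c d]; rsolve.
  - move=> [a b] [c d]; split.
    + move=> H. f_equal; simpl; rsolve.
    + move=> [<- <-]; rsolve.
  - move=> [a b] [c d]; rsolve.
  - move=> [a b] [c d] [e f]; rsolve.
Qed.

Lemma pow_ge1 (x : R) (k : nat) : 1 <= x -> 1 <= x ^ k.
Proof.
  move=> Hx; elim: k => [|k IH] /=; first lra.
  have: 1 * 1 <= x * x ^ k by apply Rmult_le_compat; lra.
  lra.
Qed.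

Lemma pow2_big (k : nat) : INR k <= 2 ^ k.
Proof.
  elim: k => [|k IH]; first by simpl; lra.
  rewrite S_INR /=. have := pow_ge1 2 k. lra.
Qed.

Lemma derived (n : nat) (F : ('I_n -> R) -> R) (HMB : P_MB n F) :
  (forall v, (forall i, 0 <= v i) -> (F v = 0 <-> forall i, v i = 0)) /\
  exists K, 1 <= K /\
   (forall a b, (forall i, 0 <= a i <= 2 * b i) -> F a <= 2 * K * F b) /\
   (forall b c, (forall i, 0 <= b i /\ 0 <= c i) ->
       F (fun i => Rmax (b i) (c i)) <= K * (F b + F c)).
Proof.
  have [_ [Hz [_ [K [HK Ht]]]]] :=
    HMB (fun _ => (R * R)%type) (fun _ => dinf) (fun _ => dinf_metric).
  unfold prodD in *.
  split.
  - move=> v Hv.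
    have := Hz (fun _ => (0, 0)) (fun i => (v i, 0)).
    have -> : (fun i => dinf (0, 0) (v i, 0)) = v.
    { apply functional_extensionality => i; have := Hv i; rsolve. }
    move=> ->; split.
    + move=> E i. have := f_equal (fun f => fst (f i)) E. simpl. lra.
    + move=> E. apply functional_extensionality => i. by rewrite E.
  - exists K; split; first done; split.
    + move=> a b Hab.
      have := Ht (fun _ => (0,0)) (fun i => (a i / 2, b i)) (fun i => (a i, 0)).
      have -> : (fun i => dinf (0, 0) (a i, 0)) = a.
      { apply functional_extensionality => i; have := Hab i; rsolve. }
      have -> : (fun i => dinf (0, 0) (a i / 2, b i)) = b.
      { apply functional_extensionality => i; have := Hab i; rsolve. }
      have -> : (fun i => dinf (a i / 2, b i) (a i, 0)) = b.
      { apply functional_extensionality => i; have := Hab i; rsolve. }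
      lra.
    + move=> b c Hbc.
      have := Ht (fun i => (b i, 0)) (fun _ => (0,0)) (fun i => (0, c i)).
      have -> : (fun i => dinf (b i, 0) (0, c i)) = (fun i => Rmax (b i) (c i)).
      { apply functional_extensionality => i; have := Hbc i; rsolve. }
      have -> : (fun i => dinf (b i, 0) (0, 0)) = b.
      { apply functional_extensionality => i; have := Hbc i; rsolve. }
      have -> : (fun i => dinf (0, 0) (0, c i)) = c.
      { apply functional_extensionality => i; have := Hbc i; rsolve. }
      done.
Qed.

Lemma fin_bound (n : nat) (P : 'I_n -> R -> Prop)
  (Hup : forall i K K', K <= K' -> P i K -> P i K')
  (H : forall i, exists K, P i K) : exists L, forall i, P i L.
Proof.
  suff: forall m, exists L, forall i : 'I_n, (i < m)%N -> P i L.
  { move=> /(_ n) [L HL]; exists L => i; exact: HL. }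
  elim=> [|m [L HL]]; first by exists 0.
  case: (ltnP m n) => hm.
  - have [K0 HK0] := H (Ordinal hm).
    exists (Rmax L K0) => i; rewrite ltnS leq_eqVlt => /orP [/eqP E|E].
    + have -> : i = Ordinal hm by apply: ord_inj.
      apply: Hup HK0; apply Rmax_r.
    + apply: Hup (HL i E); apply Rmax_l.
  - exists L => i _; apply: HL; exact: leq_trans (ltn_ord i) hm.
Qed.

Theorem theorem3p2 (n : nat) (F : ('I_n -> R) -> R)
  (HF : forall v : 'I_n -> R, (forall i, 0 <= v i) -> 0 <= F v) :
  P_B n F <-> P_MB n F.
Proof.
  split.
  - move=> HB X d Hd; apply: HB => i.
    have [h1 [h2 [h3 h4]]] := Hd i.
    split; [done|split; [done|split; [done|]]].
    exists 1; split; first lra. move=> x y z; have := h4 x y z; lra.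
  - move=> HMB X d Hd.
    have [Hz [K [HK [Hmon Hmax]]]] := derived _ _ HMB.
    have Hnn : forall i u v, 0 <= d i u v by move=> i; case: (Hd i).
    unfold is_bmetric, prodD.
    split; [|split; [|split]].
    + move=> x y; apply HF => i; apply Hnn.
    + move=> x y; rewrite Hz; last by move=> i; apply Hnn.
      split.
      * move=> E; apply functional_extensionality_dep => i.
        have [_ [h _]] := Hd i. by apply/h.
      * move=> -> i. have [_ [h _]] := Hd i. by apply/h.
    + move=> x y; f_equal; apply functional_extensionality => i.
      by have [_ [_ [h _]]] := Hd i.
    + pose P := fun i L => 1 <= L /\
          forall u v w, d i u w <= L * (d i u v + d i v w).
      have Hup : forall i K1 K2, K1 <= K2 -> P i K1 -> P i K2.
      { move=> i K1 K2 HK12 [h1 h2]; split; first lra.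
           move=> u v w; have := h2 u v w.
           have := Hnn i u v; have := Hnn i v w. nra. }
      have Hex : forall i, exists K0, P i K0.
      { move=> i; have [_ [_ [_ [K0 HK0]]]] := Hd i; by exists K0. }
      have [L HL] := fin_bound n P Hup Hex.
      have [k Hk] := INR_unbounded (2 * L).
      have Hk' : 2 * L <= 2 ^ k by have := pow2_big k; lra.
      have chain : forall j a m, (forall i, 0 <= m i) ->
          (forall i, 0 <= a i <= 2 ^ (S j) * m i) -> F a <= (2 * K) ^ (S j) * F m.
      { elim=> [|j IH] a m Hm Ham.
        - rewrite /= Rmult_1_r. apply Hmon => i; have := Ham i; simpl; lra.
        - have Hm' : forall i, 0 <= 2 ^ S j * m i.
          { move=> i; apply Rmult_le_pos; [apply pow_le; lra|apply Hm]. }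
          have h1 := Hmon a (fun i => 2 ^ S j * m i)
            (fun i => ltac:(have := Ham i; simpl; lra)).
          have h2 := IH (fun i => 2 ^ S j * m i) m Hm
            (fun i => ltac:(split; [apply Hm'|lra])).
          have := HF (fun i => 2 ^ S j * m i) Hm'.
          change ((2 * K) ^ S (S j)) with (2 * K * (2 * K) ^ S j). nra. }
      exists ((2 * K) ^ (S k) * K); split.
      { have := pow_ge1 (2 * K) (S k). nra. }
      move=> x y z.
      have Hb := fun i => Hnn i (x i) (y i).
      have Hc := fun i => Hnn i (y i) (z i).
      have Ha : forall i, 0 <= d i (x i) (z i) <=
          2 ^ S k * Rmax (d i (x i) (y i)) (d i (y i) (z i)).
      { move=> i; split; first apply Hnn.
        have [hL1 hL2] := HL i.
        have := hL2 (x i) (y i) (z i).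
        have := Hb i; have := Hc i.
        have Hk2 : 2 * L <= 2 ^ S k by simpl; have := pow_ge1 2 k; lra.
        unfold Rmax; destruct Rle_dec; nra. }
      have h := chain k (fun i => d i (x i) (z i))
                  (fun i => Rmax (d i (x i) (y i)) (d i (y i) (z i)))
                  (fun i => ltac:(have := Hb i; unfold Rmax; destruct Rle_dec; lra)) Ha.
      have h' := Hmax (fun i => d i (x i) (y i)) (fun i => d i (y i) (z i))
                   (fun i => conj (Hb i) (Hc i)).
      have hp : 0 <= (2 * K) ^ S k by apply pow_le; lra.
      nra.
Qed.
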